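(* Let $\xi:I\to\mathbb{R}^3$ be as in the context with $k>0$ and $\tau\ne0$ on the open interval $I$, and let $e$ be its evolute. Then there exists an orientation-preserving isometry $M$ of $\mathbb{R}^3$ with $M(\xi(t))=e(t)$ for all $t\in I$ if and only if $k=|\tau|$ on $I$ and either (a) $k$ is constant on $I$ (a helix with equal curvature and absolute torsion), or (b) there exist $c>0$ and $t_0\notin I$ such that $k(t)=c\,|t-t_0|^{-1/2}$ for all $t\in I$. (The case $\tau>0$ is the curves with $k=\tau$; the case $\tau<0$ is their mirror images.)
   Context: $\xi$ is a smooth arclength-parametrized curve with curvature $k>0$, $r=1/k$, torsion $\tau$ and Frenet frame $(\mathbf{t},\mathbf{n},\mathbf{b})$. Its evolute is the curve $e(t)=\xi(t)+r(t)\mathbf{n}(t)+\frac{r'(t)}{\tau(t)}\mathbf{b}(t)$, the locus of centers of osculating spheres, parametrized by the same parameter $t$. *)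

(* Defs.v *)
From Stdlib Require Import Reals.
From Coquelicot Require Import Coquelicot.
Open Scope R_scope.

Record V3 := mkV3 { vx : R; vy : R; vz : R }.

Definition vadd (u v : V3) : V3 := mkV3 (vx u + vx v) (vy u + vy v) (vz u + vz v).
Definition vsub (u v : V3) : V3 := mkV3 (vx u - vx v) (vy u - vy v) (vz u - vz v).
Definition vscal (a : R) (u : V3) : V3 := mkV3 (a * vx u) (a * vy u) (a * vz u).
Definition dot (u v : V3) : R := vx u * vx v + vy u * vy v + vz u * vz v.
Definition cross (u v : V3) : V3 :=
  mkV3 (vy u * vz v - vz u * vy v)
       (vz u * vx v - vx u * vz v)
       (vx u * vy v - vy u * vx v).
Definition vnorm (u : V3) : R := sqrt (dot u u).
Definition det3 (u v w : V3) : R := dot (cross u v) w.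

Definition in_I (a b : Rbar) (t : R) : Prop := Rbar_lt a t /\ Rbar_lt t b.

Definition dV (c : R -> V3) (t : R) : V3 :=
  mkV3 (Derive (fun s => vx (c s)) t)
       (Derive (fun s => vy (c s)) t)
       (Derive (fun s => vz (c s)) t).

Definition smooth_on (a b : Rbar) (c : R -> V3) : Prop :=
  forall (n : nat) (t : R), in_I a b t ->
    ex_derive (Derive_n (fun s => vx (c s)) n) t /\
    ex_derive (Derive_n (fun s => vy (c s)) n) t /\
    ex_derive (Derive_n (fun s => vz (c s)) n) t.

(* Frenet apparatus of an arclength-parametrized curve *)
Definition curvature (c : R -> V3) (t : R) : R := vnorm (dV (dV c) t).
Definition tangent (c : R -> V3) (t : R) : V3 := dV c t.
Definition normal (c : R -> V3) (t : R) : V3 := vscal (/ curvature c t) (dV (dV c) t).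
Definition binormal (c : R -> V3) (t : R) : V3 := cross (tangent c t) (normal c t).
(* Frenet: n' = -k t + tau b, hence tau = n' . b *)
Definition torsion (c : R -> V3) (t : R) : R := dot (dV (normal c) t) (binormal c t).
Definition radius (c : R -> V3) (t : R) : R := / curvature c t.

Definition evolute (c : R -> V3) (t : R) : V3 :=
  vadd (vadd (c t) (vscal (radius c t) (normal c t)))
       (vscal (Derive (radius c) t / torsion c t) (binormal c t)).

Definition orient_isometry (M : V3 -> V3) : Prop :=
  (forall x y, vnorm (vsub (M x) (M y)) = vnorm (vsub x y)) /\
  (forall x y z w, det3 (vsub (M y) (M x)) (vsub (M z) (M x)) (vsub (M w) (M x))
                   = det3 (vsub y x) (vsub z x) (vsub w x)).

(* Main.v *)
Require Import Defs.
From Stdlib Require Import Reals Lra Nsatz.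
From Coquelicot Require Import Coquelicot.
Open Scope R_scope.

Lemma D_plus (f g : R -> R) x a b : is_derive f x a -> is_derive g x b ->
  is_derive (fun s => f s + g s) x (a + b).
Proof. intros; now apply (is_derive_plus f g). Qed.
Lemma D_minus (f g : R -> R) x a b : is_derive f x a -> is_derive g x b ->
  is_derive (fun s => f s - g s) x (a - b).
Proof. intros; now apply (is_derive_minus f g). Qed.
Lemma D_mult (f g : R -> R) x a b : is_derive f x a -> is_derive g x b ->
  is_derive (fun s => f s * g s) x (a * g x + f x * b).
Proof. intros. apply (is_derive_mult f g); auto. intros; apply Rmult_comm. Qed.
Lemma D_const (c x : R) : is_derive (fun _ => c) x 0.
Proof. apply (is_derive_const c x). Qed.
Lemma D_id (x : R) : is_derive (fun s => s) x 1.
Proof. apply (is_derive_id x). Qed.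
Lemma D_inv (f : R -> R) x a : is_derive f x a -> f x <> 0 ->
  is_derive (fun s => / f s) x (- a / f x ^ 2).
Proof. intros; now apply is_derive_inv. Qed.
Lemma D_ext_loc (f g : R -> R) x a : locally x (fun s => f s = g s) ->
  is_derive f x a -> is_derive g x a.
Proof. intros; now apply (is_derive_ext_loc f g). Qed.
Lemma D_unique (f : R -> R) x a b : is_derive f x a -> is_derive f x b -> a = b.
Proof. intros H1 H2. apply is_derive_unique in H1. apply is_derive_unique in H2. congruence. Qed.
Lemma D_const_loc (f : R -> R) x c a : locally x (fun s => c = f s) -> is_derive f x a -> a = 0.
Proof. intros Hl H. apply (D_unique f x a 0); auto. apply (D_ext_loc (fun _ => c)); auto. apply D_const. Qed.
Lemma D_Derive (f : R -> R) x a : is_derive f x a -> Derive f x = a.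
Proof. apply is_derive_unique. Qed.

Lemma in_I_open a b : open (in_I a b).
Proof. unfold in_I. apply open_and; [apply open_Rbar_gt | apply open_Rbar_lt]. Qed.
Lemma in_I_loc a b t : in_I a b t -> locally t (in_I a b).
Proof. intro H. now apply in_I_open. Qed.
Lemma loc_eq a b t (P : R -> Prop) : in_I a b t -> (forall s, in_I a b s -> P s) -> locally t P.
Proof. intros H HP. apply filter_imp with (in_I a b); auto. now apply in_I_loc. Qed.
Lemma in_I_between a b s1 s2 x : in_I a b s1 -> in_I a b s2 -> s1 <= x <= s2 -> in_I a b x.
Proof.
  intros [H1 H2] [H3 H4] [H5 H6]. split.
  - apply (Rbar_lt_le_trans a (Finite s1) (Finite x)); auto.
  - apply (Rbar_le_lt_trans (Finite x) (Finite s2) b); auto.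
Qed.
Lemma in_I_ex a b : Rbar_lt a b -> exists s, in_I a b s.
Proof.
  unfold in_I. destruct a as [a| |], b as [b| |]; simpl; intros H; try contradiction.
  - exists ((a+b)/2). split; lra.
  - exists (a+1). split; auto; lra.
  - exists (b-1). split; auto; lra.
  - exists 0. split; auto.
Qed.

Lemma const_on_I a b (f : R -> R) : (forall s, in_I a b s -> is_derive f s 0) ->
  forall s1 s2, in_I a b s1 -> in_I a b s2 -> f s1 = f s2.
Proof.
  intros Hd s1 s2 H1 H2.
  assert (Hin : forall x, Rmin s1 s2 <= x <= Rmax s1 s2 -> in_I a b x).
  { intros x Hx. unfold Rmin, Rmax in Hx. destruct (Rle_dec s1 s2).
    - eapply (in_I_between a b s1 s2); eauto.
    - eapply (in_I_between a b s2 s1); eauto. }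
  destruct (MVT_gen f s1 s2 (fun _ => 0)) as [c [_ Hc]].
  - intros x Hx. apply Hd, Hin. lra.
  - intros x Hx. apply continuity_pt_filterlim. apply (ex_derive_continuous (K:=R_AbsRing) (V:=R_NormedModule)).
    exists 0. apply Hd, Hin; auto.
  - lra.
Qed.

Lemma v3_ext u v : vx u = vx v -> vy u = vy v -> vz u = vz v -> u = v.
Proof. destruct u, v; simpl; intros; subst; auto. Qed.
Ltac veq := apply v3_ext; simpl.

Definition lin (C1 C2 C3 x : V3) : V3 :=
  vadd (vadd (vscal (vx x) C1) (vscal (vy x) C2)) (vscal (vz x) C3).

Lemma dot_ge0 u : 0 <= dot u u.
Proof. unfold dot. nra. Qed.
Lemma dot_zero u : dot u u = 0 -> u = mkV3 0 0 0.
Proof. unfold dot; intro H. destruct u; simpl in *. f_equal; nra. Qed.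
Lemma vnorm_sq u v : vnorm u = vnorm v -> dot u u = dot v v.
Proof. unfold vnorm; intro H. apply sqrt_inj; auto using dot_ge0. Qed.
Lemma vnorm_1 u : vnorm u = 1 -> dot u u = 1.
Proof. intro H. unfold vnorm in H. rewrite <- (sqrt_sqrt (dot u u)) by apply dot_ge0. rewrite H; ring. Qed.

Lemma expand T N x : dot T T = 1 -> dot N N = 1 -> dot T N = 0 ->
  x = vadd (vadd (vscal (dot x T) T) (vscal (dot x N) N)) (vscal (dot x (cross T N)) (cross T N)).
Proof.
  destruct T as [t1 t2 t3], N as [n1 n2 n3], x as [x1 x2 x3]; unfold dot, cross; simpl; intros.
  veq; nsatz.
Qed.
Definition vder (c : R -> V3) (t : R) (v : V3) : Prop :=
  is_derive (fun s => vx (c s)) t (vx v) /\ is_derive (fun s => vy (c s)) t (vy v) /\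
  is_derive (fun s => vz (c s)) t (vz v).

Lemma vder_dV c t v : vder c t v -> dV c t = v.
Proof. intros [H1 [H2 H3]]. unfold dV. veq; now apply D_Derive. Qed.
Lemma vder_unique c t v w : vder c t v -> vder c t w -> v = w.
Proof. intros H1 H2. apply vder_dV in H1. apply vder_dV in H2. congruence. Qed.
Lemma vder_ext_loc (c d : R -> V3) t v : locally t (fun s => c s = d s) -> vder c t v -> vder d t v.
Proof.
  intros Hl [H1 [H2 H3]]; split; [|split];
  (eapply D_ext_loc; [|eauto]; apply filter_imp with (2:=Hl); intros s Hs; now rewrite Hs).
Qed.
Lemma vder_add c d t v w : vder c t v -> vder d t w -> vder (fun s => vadd (c s) (d s)) t (vadd v w).
Proof. intros [H1 [H2 H3]] [G1 [G2 G3]]; split; [|split]; simpl; now apply D_plus. Qed.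
Lemma vder_sub c d t v w : vder c t v -> vder d t w -> vder (fun s => vsub (c s) (d s)) t (vsub v w).
Proof. intros [H1 [H2 H3]] [G1 [G2 G3]]; split; [|split]; simpl; now apply D_minus. Qed.
Lemma vder_scal f c t a v : is_derive f t a -> vder c t v ->
  vder (fun s => vscal (f s) (c s)) t (vadd (vscal a (c t)) (vscal (f t) v)).
Proof. intros Hf [H1 [H2 H3]]; split; [|split]; simpl; now apply D_mult. Qed.
Lemma vder_cscal (k : R) c t v : vder c t v -> vder (fun s => vscal k (c s)) t (vscal k v).
Proof.
  intros H. eapply vder_ext_loc; [apply filter_forall; reflexivity|].
  assert (E : vscal k v = vadd (vscal 0 (c t)) (vscal k v)) by (veq; ring).
  rewrite E. apply vder_scal; auto. apply D_const.
Qed.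
Lemma vder_const (p : V3) t : vder (fun _ => p) t (mkV3 0 0 0).
Proof. split; [|split]; simpl; apply D_const. Qed.
Lemma D_dot c d t v w : vder c t v -> vder d t w ->
  is_derive (fun s => dot (c s) (d s)) t (dot v (d t) + dot (c t) w).
Proof.
  intros [H1 [H2 H3]] [G1 [G2 G3]]. unfold dot.
  replace (vx v * vx (d t) + vy v * vy (d t) + vz v * vz (d t) +
   (vx (c t) * vx w + vy (c t) * vy w + vz (c t) * vz w)) with
   ((vx v * vx (d t) + vx (c t) * vx w) + (vy v * vy (d t) + vy (c t) * vy w) + (vz v * vz (d t) + vz (c t) * vz w)) by ring.
  apply D_plus; [apply D_plus|]; apply D_mult; auto.
Qed.
Lemma vder_cross c d t v w : vder c t v -> vder d t w ->
  vder (fun s => cross (c s) (d s)) t (vadd (cross v (d t)) (cross (c t) w)).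
Proof.
  intros [H1 [H2 H3]] [G1 [G2 G3]]; unfold cross; split; [|split]; simpl;
  (eapply D_ext_loc; [apply filter_forall; reflexivity|]).
  - replace (vy v * vz (d t) - vz v * vy (d t) + (vy (c t) * vz w - vz (c t) * vy w))
     with ((vy v * vz (d t) + vy (c t) * vz w) - (vz v * vy (d t) + vz (c t) * vy w)) by ring.
    apply D_minus; now apply D_mult.
  - replace (vz v * vx (d t) - vx v * vz (d t) + (vz (c t) * vx w - vx (c t) * vz w))
     with ((vz v * vx (d t) + vz (c t) * vx w) - (vx v * vz (d t) + vx (c t) * vz w)) by ring.
    apply D_minus; now apply D_mult.
  - replace (vx v * vy (d t) - vy v * vx (d t) + (vx (c t) * vy w - vy (c t) * vx w))
     with ((vx v * vy (d t) + vx (c t) * vy w) - (vy v * vx (d t) + vy (c t) * vx w)) by ring.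
    apply D_minus; now apply D_mult.
Qed.
Lemma vder_lin C1 C2 C3 c t v : vder c t v -> vder (fun s => lin C1 C2 C3 (c s)) t (lin C1 C2 C3 v).
Proof.
  intros [H1 [H2 H3]]. unfold lin.
  assert (E : forall (f : R -> R) a (C : V3), is_derive f t a -> vder (fun s => vscal (f s) C) t (vscal a C)).
  { intros f a C Hf. eapply vder_ext_loc; [apply filter_forall; reflexivity|].
    assert (E : vscal a C = vadd (vscal a C) (vscal (f t) (mkV3 0 0 0))) by (veq; ring).
    rewrite E. apply (vder_scal f (fun _ => C)); auto. apply vder_const. }
  apply vder_add; [apply vder_add|]; apply E; auto.
Qed.
Definition X (xi : R -> V3) (n : nat) (s : R) : V3 :=
  mkV3 (Derive_n (fun s => vx (xi s)) n s) (Derive_n (fun s => vy (xi s)) n s)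
       (Derive_n (fun s => vz (xi s)) n s).
Definition kk xi s := vnorm (X xi 2 s).
Definition NN xi s := vscal (/ kk xi s) (X xi 2 s).
Definition BB xi s := cross (X xi 1 s) (NN xi s).
Definition kd xi s := dot (X xi 2 s) (X xi 3 s) / kk xi s.
Definition Nd xi s := vadd (vscal (- kd xi s / kk xi s ^ 2) (X xi 2 s)) (vscal (/ kk xi s) (X xi 3 s)).
Definition rd xi s := - kd xi s / kk xi s ^ 2.

Lemma curv_kk xi s : curvature xi s = kk xi s. Proof. reflexivity. Qed.
Lemma dV_X1 xi s : dV xi s = X xi 1 s. Proof. reflexivity. Qed.

Lemma dot_scal_r u c v : dot u (vscal c v) = c * dot u v.
Proof. unfold dot; simpl; ring. Qed.
Lemma dot_scal_l u c v : dot (vscal c u) v = c * dot u v.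
Proof. unfold dot; simpl; ring. Qed.
Lemma dot_comm u v : dot u v = dot v u.
Proof. unfold dot; ring. Qed.
Lemma cross_props T N : dot T T = 1 -> dot N N = 1 -> dot T N = 0 ->
  dot (cross T N) (cross T N) = 1 /\ dot T (cross T N) = 0 /\ dot N (cross T N) = 0.
Proof.
  destruct T as [t1 t2 t3], N as [n1 n2 n3]; unfold dot, cross; simpl; intros.
  split; [|split]; [nsatz | ring | ring].
Qed.
Lemma D_opp (f : R -> R) x a : is_derive f x a -> is_derive (fun s => - f s) x (- a).
Proof. intro H. apply (is_derive_opp f x a H). Qed.
Lemma D_div (f g : R -> R) x a c : is_derive f x a -> is_derive g x c -> g x <> 0 ->
  is_derive (fun s => f s / g s) x ((a * g x - f x * c) / g x ^ 2).
Proof. intros; now apply is_derive_div. Qed.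
Lemma D_sq (f : R -> R) x a : is_derive f x a -> is_derive (fun s => f s ^ 2) x (2 * a * f x).
Proof.
  intro H. replace (2 * a * f x) with (INR 2 * a * f x ^ Init.Nat.pred 2) by (simpl; ring).
  now apply is_derive_pow.
Qed.

Lemma sq1_der0 (f : R -> R) t d : locally t (fun s => f s * f s = 1) -> is_derive f t d -> d = 0.
Proof.
  intros Hl Hd. assert (D := D_mult f f t d d Hd Hd).
  apply D_const_loc with (c := 1) in D.
  - assert (E : f t * f t = 1) by (apply locally_singleton in Hl; auto).
    nra.
  - apply filter_imp with (2 := Hl). intros; auto.
Qed.

Definition FL (T N P Q x : V3) : V3 :=
  lin (vadd (vadd (vscal (vx T) P) (vscal (vx N) Q)) (vscal (vx (cross T N)) (cross P Q)))
      (vadd (vadd (vscal (vy T) P) (vscal (vy N) Q)) (vscal (vy (cross T N)) (cross P Q)))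
      (vadd (vadd (vscal (vz T) P) (vscal (vz N) Q)) (vscal (vz (cross T N)) (cross P Q))) x.

Lemma FL_eq T N P Q x : FL T N P Q x =
  vadd (vadd (vscal (dot x T) P) (vscal (dot x N) Q)) (vscal (dot x (cross T N)) (cross P Q)).
Proof. unfold FL, lin, dot. veq; ring. Qed.

Lemma comb_dot (a1 a2 a3 b1 b2 b3 : R) U1 U2 U3 :
  dot (vadd (vadd (vscal a1 U1) (vscal a2 U2)) (vscal a3 U3))
      (vadd (vadd (vscal b1 U1) (vscal b2 U2)) (vscal b3 U3)) =
  a1*b1*dot U1 U1 + a2*b2*dot U2 U2 + a3*b3*dot U3 U3 + (a1*b2+a2*b1)*dot U1 U2
  + (a1*b3+a3*b1)*dot U1 U3 + (a2*b3+a3*b2)*dot U2 U3.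
Proof. unfold dot; simpl; ring. Qed.

Lemma comb_det (a1 a2 a3 b1 b2 b3 c1 c2 c3 : R) U1 U2 U3 :
  det3 (vadd (vadd (vscal a1 U1) (vscal a2 U2)) (vscal a3 U3))
       (vadd (vadd (vscal b1 U1) (vscal b2 U2)) (vscal b3 U3))
       (vadd (vadd (vscal c1 U1) (vscal c2 U2)) (vscal c3 U3)) =
  (a1*(b2*c3-b3*c2) - a2*(b1*c3-b3*c1) + a3*(b1*c2-b2*c1)) * det3 U1 U2 U3.
Proof. unfold det3, dot, cross; simpl; ring. Qed.

Lemma dot_expand T N y x : dot T T = 1 -> dot N N = 1 -> dot T N = 0 ->
  dot x y = dot x T * dot y T + dot x N * dot y N + dot x (cross T N) * dot y (cross T N).
Proof.
  intros H1 H2 H3. rewrite (expand T N x) at 1 by auto.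
  unfold dot; simpl; ring.
Qed.

Lemma FL_dot T N P Q x y : dot T T = 1 -> dot N N = 1 -> dot T N = 0 ->
  dot P P = 1 -> dot Q Q = 1 -> dot P Q = 0 ->
  dot (FL T N P Q x) (FL T N P Q y) = dot x y.
Proof.
  intros H1 H2 H3 G1 G2 G3. destruct (cross_props P Q G1 G2 G3) as [G4 [G5 G6]].
  rewrite !FL_eq, comb_dot, G1, G2, G3, G4, G5, G6.
  rewrite (dot_expand T N y x) by auto. ring.
Qed.

Lemma det_self P Q : det3 P Q (cross P Q) = dot (cross P Q) (cross P Q).
Proof. reflexivity. Qed.

Lemma FL_det T N P Q x y z : dot T T = 1 -> dot N N = 1 -> dot T N = 0 ->
  dot P P = 1 -> dot Q Q = 1 -> dot P Q = 0 ->
  det3 (FL T N P Q x) (FL T N P Q y) (FL T N P Q z) = det3 x y z.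
Proof.
  intros H1 H2 H3 G1 G2 G3. destruct (cross_props P Q G1 G2 G3) as [G4 [G5 G6]].
  destruct (cross_props T N H1 H2 H3) as [H4 [H5 H6]].
  rewrite !FL_eq, comb_det, det_self, G4.
  pose (ex := fun x : V3 => vadd (vadd (vscal (dot x T) T) (vscal (dot x N) N)) (vscal (dot x (cross T N)) (cross T N))).
  replace (det3 x y z) with (det3 (ex x) (ex y) (ex z)) by
    (unfold ex; now rewrite <- (expand T N x), <- (expand T N y), <- (expand T N z)).
  unfold ex.
  rewrite comb_det, det_self, H4. ring.
Qed.

Lemma FL_T T N P Q : dot T T = 1 -> dot N N = 1 -> dot T N = 0 ->
  FL T N P Q T = P /\ FL T N P Q N = Q /\ FL T N P Q (cross T N) = cross P Q.
Proof.
  intros H1 H2 H3. destruct (cross_props T N H1 H2 H3) as [H4 [H5 H6]].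
  rewrite !FL_eq, H1, H2, H4, (dot_comm N T), H3, H5, H6, (dot_comm (cross T N) T), H5,
    (dot_comm (cross T N) N), H6.
  split; [|split]; veq; ring.
Qed.

Lemma sum3_eq u1 u2 u3 v1 v2 v3 : dot u1 u1 = 1 -> dot u2 u2 = 1 -> dot u3 u3 = 1 ->
  dot v1 v1 = 1 -> dot v2 v2 = 1 -> dot v3 v3 = 1 ->
  dot u1 v1 + dot u2 v2 + dot u3 v3 = 3 -> u1 = v1 /\ u2 = v2 /\ u3 = v3.
Proof.
  intros. 
  assert (E : forall u v, dot (vsub u v) (vsub u v) = dot u u + dot v v - 2 * dot u v)
    by (intros; unfold dot; simpl; ring).
  assert (P1 := dot_ge0 (vsub u1 v1)). assert (P2 := dot_ge0 (vsub u2 v2)).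
  assert (P3 := dot_ge0 (vsub u3 v3)). rewrite E in P1, P2, P3.
  assert (Z : forall u v, dot (vsub u v) (vsub u v) = 0 -> u = v).
  { intros u v Hz. apply dot_zero in Hz. destruct u, v; simpl in Hz. injection Hz; intros.
    f_equal; lra. }
  split; [|split]; apply Z; rewrite E; lra.
Qed.

Lemma alg_detX (T N : V3) k kd tau :
  det3 T (vscal k N) (vadd (vscal kd N) (vscal k (vadd (vscal (- k) T) (vscal tau (cross T N))))) =
  k ^ 2 * tau * dot (cross T N) (cross T N).
Proof. destruct T, N; unfold det3, dot, cross; simpl; ring. Qed.

Lemma alg_detL (T N : V3) s k c tau :
  det3 (vscal s (cross T N)) (vscal (- (s * tau)) N)
    (vadd (vscal c N) (vscal (- (s * tau)) (vadd (vscal (- k) T) (vscal tau (cross T N))))) =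
  s ^ 3 * tau ^ 2 * k * dot (cross T N) (cross T N).
Proof. destruct T, N; unfold det3, dot, cross; simpl; ring. Qed.

Lemma alg_f (C1 C2 C3 T N B : V3) (k s : R) : s = 1 \/ s = -1 ->
  dot (lin C1 C2 C3 (vscal k N)) (vscal s B) + dot (lin C1 C2 C3 T) (vscal s (vscal (- (s * k)) N))
  + (dot (lin C1 C2 C3 (vadd (vscal (- k) T) (vscal (s * k) B))) (vscal (-1) N)
     + dot (lin C1 C2 C3 N) (vscal (-1) (vadd (vscal (- k) T) (vscal (s * k) B))))
  + (dot (lin C1 C2 C3 (vscal (- (s * k)) N)) (vscal s T) + dot (lin C1 C2 C3 B) (vscal s (vscal k N)))
  = 0.
Proof.
  intros [-> | ->]; destruct C1, C2, C3, T, N, B; unfold lin, dot; simpl; ring.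
Qed.

Lemma cross_PQ (T N : V3) s : dot T T = 1 -> dot N N = 1 -> dot T N = 0 ->
  cross (vscal s (cross T N)) (vscal (-1) N) = vscal s T.
Proof.
  destruct T as [t1 t2 t3], N as [n1 n2 n3]; unfold dot, cross; simpl; intros.
  veq; nsatz.
Qed.

Lemma vder_FL T N P Q c t v : vder c t v -> vder (fun s => FL T N P Q (c s)) t (FL T N P Q v).
Proof. intro H. unfold FL. now apply vder_lin. Qed.
Section Frenet.
Context (a b : Rbar) (xi : R -> V3) (Hsm : smooth_on a b xi)
  (Hunit : forall t, in_I a b t -> vnorm (dV xi t) = 1)
  (Hk : forall t, in_I a b t -> 0 < curvature xi t)
  (Htau : forall t, in_I a b t -> torsion xi t <> 0).

Lemma X_der n t : in_I a b t -> vder (X xi n) t (X xi (S n) t).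
Proof.
  intro H. destruct (Hsm n t H) as [h1 [h2 h3]].
  split; [|split]; apply Derive_correct; assumption.
Qed.
Lemma xi_der t : in_I a b t -> vder xi t (X xi 1 t).
Proof. intro H. exact (X_der 0 t H). Qed.

Lemma kk_pos t : in_I a b t -> 0 < kk xi t.
Proof. apply Hk. Qed.
Lemma dot11 t : in_I a b t -> dot (X xi 1 t) (X xi 1 t) = 1.
Proof. intro H. apply vnorm_1. apply (Hunit t H). Qed.
Lemma dot12 t : in_I a b t -> dot (X xi 1 t) (X xi 2 t) = 0.
Proof.
  intro H. assert (D := D_dot _ _ t _ _ (X_der 1 t H) (X_der 1 t H)).
  apply D_const_loc with (c := 1) in D.
  - unfold dot in *; lra.
  - apply (loc_eq a b); auto. intros s Hs. symmetry. now apply dot11.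
Qed.
Lemma dot22 t : in_I a b t -> dot (X xi 2 t) (X xi 2 t) = kk xi t ^ 2.
Proof.
  intro H. unfold kk, vnorm. simpl. rewrite Rmult_1_r, sqrt_sqrt; auto using dot_ge0.
Qed.
Lemma kk_der t : in_I a b t -> is_derive (kk xi) t (kd xi t).
Proof.
  intro H. assert (Hp := kk_pos t H).
  assert (Hd : 0 < dot (X xi 2 t) (X xi 2 t)) by (rewrite dot22; auto; nra).
  unfold kk, vnorm. eapply D_ext_loc; [apply filter_forall; reflexivity|].
  assert (D := D_dot _ _ t _ _ (X_der 2 t H) (X_der 2 t H)).
  assert (D2 := is_derive_sqrt _ _ _ D Hd).
  replace (kd xi t) with ((dot (X xi 3 t) (X xi 2 t) + dot (X xi 2 t) (X xi 3 t)) /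
        (2 * sqrt (dot (X xi 2 t) (X xi 2 t)))).
  - exact D2.
  - assert (Hs : sqrt (dot (X xi 2 t) (X xi 2 t)) <> 0) by (unfold kk, vnorm in Hp; lra).
    unfold kd, kk, vnorm. replace (dot (X xi 3 t) (X xi 2 t)) with (dot (X xi 2 t) (X xi 3 t)) by (unfold dot; ring).
    field. auto.
Qed.
Let T := X xi 1.
Let N := NN xi.
Let B := BB xi.
Let k := kk xi.
Let tau := torsion xi.

Lemma N_der t : in_I a b t -> vder N t (Nd xi t).
Proof.
  intro H. assert (Hp := kk_pos t H).
  apply (vder_scal (fun s => / kk xi s)).
  - apply D_inv. apply (kk_der t H). lra.
  - apply (X_der 2 t H).
Qed.
Lemma X2_kN t : in_I a b t -> X xi 2 t = vscal (k t) (N t).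
Proof. intro H. assert (Hp := kk_pos t H). unfold N, NN, k. veq; field; lra. Qed.
Lemma dotNN t : in_I a b t -> dot (N t) (N t) = 1.
Proof.
  intro H. assert (Hp := kk_pos t H). assert (D := dot22 t H).
  unfold N, NN. rewrite dot_scal_l, dot_scal_r, D. field. lra.
Qed.
Lemma dotTN t : in_I a b t -> dot (T t) (N t) = 0.
Proof.
  intro H. unfold N, NN, T. rewrite dot_scal_r, (dot12 t H). ring.
Qed.
Lemma dotTT t : in_I a b t -> dot (T t) (T t) = 1.
Proof. apply dot11. Qed.
Lemma dotBB t : in_I a b t -> dot (B t) (B t) = 1 /\ dot (T t) (B t) = 0 /\ dot (N t) (B t) = 0.
Proof. intro H. apply cross_props; auto using dotTT, dotNN, dotTN. Qed.

Lemma NdT t : in_I a b t -> dot (Nd xi t) (T t) = - k t.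
Proof.
  intro H. assert (D := D_dot _ _ t _ _ (X_der 1 t H) (N_der t H)).
  apply D_const_loc with (c := 0) in D.
  - rewrite X2_kN in D by auto. rewrite dot_scal_l, dotNN in D by auto.
    rewrite dot_comm. fold T in D. lra.
  - apply (loc_eq a b); auto. intros s Hs. symmetry. now apply dotTN.
Qed.
Lemma NdN t : in_I a b t -> dot (Nd xi t) (N t) = 0.
Proof.
  intro H. assert (D := D_dot _ _ t _ _ (N_der t H) (N_der t H)).
  apply D_const_loc with (c := 1) in D.
  - rewrite (dot_comm (N t)) in D. lra.
  - apply (loc_eq a b); auto. intros s Hs. symmetry. now apply dotNN.
Qed.
Lemma tau_eq t : in_I a b t -> tau t = dot (Nd xi t) (B t).
Proof.
  intro H. unfold tau. change (dot (dV N t) (B t) = dot (Nd xi t) (B t)).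
  now rewrite (vder_dV _ _ _ (N_der t H)).
Qed.
Lemma Nd_frenet t : in_I a b t -> Nd xi t = vadd (vscal (- k t) (T t)) (vscal (tau t) (B t)).
Proof.
  intro H. rewrite (expand (T t) (N t) (Nd xi t)) at 1 by auto using dotTT, dotNN, dotTN.
  fold (B t). rewrite NdT, NdN, <- tau_eq by auto. veq; ring.
Qed.
Lemma B_der t : in_I a b t -> vder B t (vscal (- tau t) (N t)).
Proof.
  intro H. assert (D := vder_cross _ _ t _ _ (X_der 1 t H) (N_der t H)).
  fold T N in D. rewrite X2_kN, Nd_frenet in D by auto.
  assert (E1 := dotTT t H). assert (E2 := dotNN t H). assert (E3 := dotTN t H).
  replace (vscal (- tau t) (N t)) with
    (vadd (cross (vscal (k t) (N t)) (N t))
          (cross (T t) (vadd (vscal (- k t) (T t)) (vscal (tau t) (B t))))); auto.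
  unfold B, BB. fold (T t) (N t).
  destruct (T t) as [t1 t2 t3], (N t) as [n1 n2 n3]; unfold dot in *; simpl in *.
  veq; nsatz.
Qed.

Lemma r_der t : in_I a b t -> is_derive (radius xi) t (rd xi t).
Proof.
  intro H. assert (Hp := kk_pos t H). unfold radius, rd.
  change (is_derive (fun s => / kk xi s) t (- kd xi t / kk xi t ^ 2)).
  apply D_inv. now apply kk_der. lra.
Qed.
Lemma kd_ex t : in_I a b t -> exists d, is_derive (kd xi) t d.
Proof.
  intro H. assert (Hp := kk_pos t H). eexists. unfold kd.
  apply D_div. apply D_dot; apply X_der; auto. now apply kk_der. lra.
Qed.
Lemma rd_ex t : in_I a b t -> exists d, is_derive (rd xi) t d.
Proof.
  intro H. assert (Hp := kk_pos t H). destruct (kd_ex t H) as [d Hd]. eexists. unfold rd.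
  apply D_div. apply D_opp; eauto. apply D_sq. now apply kk_der. 
  apply pow_nonzero. lra.
Qed.
Lemma Nd_ex t : in_I a b t -> exists v, vder (Nd xi) t v.
Proof.
  intro H. assert (Hp := kk_pos t H). destruct (rd_ex t H) as [d Hd]. eexists. unfold Nd.
  apply vder_add.
  - exact (vder_scal (rd xi) (X xi 2) t d (X xi 3 t) Hd (X_der 2 t H)).
  - refine (vder_scal (fun s => / kk xi s) (X xi 3) t _ (X xi 4 t) _ (X_der 3 t H)).
    apply D_inv. now apply kk_der. lra.
Qed.
Lemma tau_ex t : in_I a b t -> exists d, is_derive tau t d.
Proof.
  intro H. destruct (Nd_ex t H) as [v Hv]. eexists.
  apply (D_ext_loc (fun s => dot (Nd xi s) (B s))).
  - apply (loc_eq a b); auto. intros s Hs. symmetry. now apply tau_eq.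
  - apply D_dot; eauto. now apply B_der.
Qed.

Let q := fun s => Derive (radius xi) s / torsion xi s.
Lemma q_ex t : in_I a b t -> exists d, is_derive q t d.
Proof.
  intro H. destruct (rd_ex t H) as [d Hd]. destruct (tau_ex t H) as [d2 Hd2]. eexists.
  apply (D_ext_loc (fun s => rd xi s / tau s)).
  - apply (loc_eq a b); auto. intros s Hs. unfold q. now rewrite (D_Derive _ _ _ (r_der s Hs)).
  - apply D_div; eauto.
Qed.
Lemma q_der t : in_I a b t -> is_derive q t (Derive q t).
Proof. intro H. destruct (q_ex t H) as [d Hd]. now rewrite (D_Derive _ _ _ Hd). Qed.

Lemma evol_alg (T0 N0 B0 : V3) (k0 tau0 rd0 qd : R) : k0 <> 0 -> tau0 <> 0 ->
  vadd (vadd T0 (vadd (vscal rd0 N0) (vscal (/ k0) (vadd (vscal (- k0) T0) (vscal tau0 B0)))))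
       (vadd (vscal qd B0) (vscal (rd0 / tau0) (vscal (- tau0) N0))) = vscal (/ k0 * tau0 + qd) B0.
Proof. intros. destruct T0, N0, B0. veq; field; auto. Qed.

Definition sig t := / k t * tau t + Derive q t.

Lemma evol_der t : in_I a b t -> vder (evolute xi) t (vscal (sig t) (B t)).
Proof.
  intro H. assert (Hp := kk_pos t H). assert (Ht := Htau t H).
  change (vder (fun s => vadd (vadd (xi s) (vscal (radius xi s) (N s))) (vscal (q s) (B s))) t
     (vscal (sig t) (B t))).
  assert (D : vder (fun s => vadd (vadd (xi s) (vscal (radius xi s) (N s))) (vscal (q s) (B s))) t
     (vadd (vadd (T t) (vadd (vscal (rd xi t) (N t)) (vscal (radius xi t) (Nd xi t))))
           (vadd (vscal (Derive q t) (B t)) (vscal (q t) (vscal (- tau t) (N t)))))).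
  { apply vder_add. apply vder_add. apply xi_der; auto.
    apply vder_scal. apply r_der; auto. apply N_der; auto.
    apply vder_scal. apply q_der; auto. apply B_der; auto. }
  eapply vder_ext_loc; [apply filter_forall; reflexivity|].
  replace (vscal (sig t) (B t)) with
     (vadd (vadd (T t) (vadd (vscal (rd xi t) (N t)) (vscal (radius xi t) (Nd xi t))))
           (vadd (vscal (Derive q t) (B t)) (vscal (q t) (vscal (- tau t) (N t))))); [exact D|].
  rewrite Nd_frenet by auto. unfold q. rewrite (D_Derive _ _ _ (r_der t H)).
  unfold sig, radius. change (curvature xi t) with (k t).
  apply evol_alg; auto. unfold k; lra.
Qed.
Lemma X3_eq t : in_I a b t -> X xi 3 t = vadd (vscal (kd xi t) (N t)) (vscal (k t) (Nd xi t)).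
Proof.
  intro H. apply (vder_unique (X xi 2) t); [apply X_der; auto|].
  apply (vder_ext_loc (fun s => vscal (k s) (N s))).
  - apply (loc_eq a b); auto. intros s Hs. symmetry. now apply X2_kN.
  - apply vder_scal. now apply kk_der. now apply N_der.
Qed.
Lemma detX t : in_I a b t -> det3 (T t) (X xi 2 t) (X xi 3 t) = k t ^ 2 * tau t.
Proof.
  intro H. rewrite X3_eq, X2_kN, Nd_frenet by auto. unfold B, BB. fold (T t) (N t).
  rewrite alg_detX. destruct (dotBB t H) as [E _]. unfold B, BB in E. fold (T t) (N t) in E.
  rewrite E. ring.
Qed.
Section Fwd.
Context (C1 C2 C3 p : V3)
  (Ldot : forall u v, dot (lin C1 C2 C3 u) (lin C1 C2 C3 v) = dot u v)
  (Ldet : forall u v w, det3 (lin C1 C2 C3 u) (lin C1 C2 C3 v) (lin C1 C2 C3 w) = det3 u v w)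
  (Hev : forall t, in_I a b t -> evolute xi t = vadd (lin C1 C2 C3 (xi t)) p).
Let L := lin C1 C2 C3.

Lemma F_LT t : in_I a b t -> L (T t) = vscal (sig t) (B t).
Proof.
  intro H. apply (vder_unique (evolute xi) t); [|apply evol_der; auto].
  apply (vder_ext_loc (fun s => vadd (L (xi s)) p)).
  - apply (loc_eq a b); auto. intros s Hs. symmetry. now apply Hev.
  - replace (L (T t)) with (vadd (L (T t)) (mkV3 0 0 0)) by (destruct (L (T t)); veq; ring).
    apply vder_add. apply vder_lin. apply xi_der; auto. apply vder_const.
Qed.
Lemma F_sig2 t : in_I a b t -> sig t * sig t = 1.
Proof.
  intro H. assert (E := Ldot (T t) (T t)). fold L in E. rewrite F_LT in E by auto.
  rewrite dot_scal_l, dot_scal_r, dotTT in E by auto. destruct (dotBB t H) as [E2 _].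
  rewrite E2 in E. lra.
Qed.
Lemma F_sigd t : in_I a b t -> is_derive sig t 0.
Proof.
  intro H.
  assert (D := D_dot _ _ t _ _ (vder_lin C1 C2 C3 _ t _ (X_der 1 t H)) (B_der t H)).
  assert (D2 : is_derive sig t (dot (lin C1 C2 C3 (X xi 2 t)) (B t) +
          dot (lin C1 C2 C3 (X xi 1 t)) (vscal (- tau t) (N t)))).
  { apply (D_ext_loc _ _ _ _ (loc_eq a b t _ H (fun s Hs => eq_refl _))) in D.
    eapply D_ext_loc; [|exact D]. apply (loc_eq a b); auto. intros s Hs.
    fold (T s). fold L. rewrite F_LT, dot_scal_l by auto. destruct (dotBB s Hs) as [E _].
    rewrite E. ring. }
  rewrite <- (sq1_der0 sig t _ (loc_eq a b t _ H F_sig2) D2). exact D2.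
Qed.
Lemma F_LX2 t : in_I a b t -> L (X xi 2 t) = vscal (- (sig t * tau t)) (N t).
Proof.
  intro H. apply (vder_unique (fun s => L (T s)) t).
  - apply vder_lin. apply X_der; auto.
  - apply (vder_ext_loc (fun s => vscal (sig s) (B s))).
    + apply (loc_eq a b); auto. intros s Hs. symmetry. now apply F_LT.
    + replace (vscal (- (sig t * tau t)) (N t)) with
        (vadd (vscal 0 (B t)) (vscal (sig t) (vscal (- tau t) (N t)))) by (veq; ring).
      apply vder_scal. now apply F_sigd. now apply B_der.
Qed.
Lemma F_LX3 t : in_I a b t -> exists td,
  L (X xi 3 t) = vadd (vscal (- (0 * tau t + sig t * td)) (N t)) (vscal (- (sig t * tau t)) (Nd xi t)).
Proof.
  intro H. destruct (tau_ex t H) as [td Htd]. exists td.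
  apply (vder_unique (fun s => L (X xi 2 s)) t).
  - apply vder_lin. apply X_der; auto.
  - apply (vder_ext_loc (fun s => vscal (- (sig s * tau s)) (N s))).
    + apply (loc_eq a b); auto. intros s Hs. symmetry. now apply F_LX2.
    + apply (vder_scal (fun s => - (sig s * tau s)) N). apply (D_opp (fun s => sig s * tau s)). apply (D_mult sig tau). now apply F_sigd. exact Htd. now apply N_der.
Qed.
Lemma F_k t : in_I a b t -> k t = sig t * tau t.
Proof.
  intro H. destruct (F_LX3 t H) as [td E3].
  assert (E := Ldet (T t) (X xi 2 t) (X xi 3 t)). fold L in E.
  rewrite detX in E by auto. rewrite F_LT, F_LX2, E3, Nd_frenet in E by auto.
  unfold B, BB in E. fold (T t) (N t) in E. rewrite alg_detL in E.
  destruct (dotBB t H) as [E2 _]. unfold B, BB in E2. fold (T t) (N t) in E2. rewrite E2 in E.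
  assert (S := F_sig2 t H). assert (Hp := kk_pos t H). assert (Ht := Htau t H). fold k tau in Hp, Ht.
  assert (E4 : k t * tau t * (k t - sig t * tau t) = 0).
  { replace (sig t ^ 3) with (sig t * (sig t * sig t)) in E by ring. rewrite S in E. nra. }
  apply Rmult_integral in E4. destruct E4 as [E4|E4]; [|lra].
  apply Rmult_integral in E4. lra.
Qed.
Lemma F_qd t : in_I a b t -> Derive q t = 0.
Proof.
  intro H. assert (E := F_k t H). assert (S := F_sig2 t H).
  assert (Hp := kk_pos t H). assert (Ht := Htau t H). fold k tau in Hp, Ht.
  assert (Hs : sig t <> 0) by (intro Z; rewrite Z in S; lra).
  assert (E2 : sig t = / k t * tau t + Derive q t) by reflexivity.
  assert (A1 : / k t * tau t = / sig t) by (rewrite E; field; split; auto).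
  assert (A2 : / sig t = sig t).
  { apply (Rmult_eq_reg_l (sig t)); auto. rewrite Rinv_r; auto. }
  lra.
Qed.
Lemma F_abs t : in_I a b t -> curvature xi t = Rabs (torsion xi t).
Proof.
  intro H. assert (E := F_k t H). assert (S := F_sig2 t H).
  assert (Hp := kk_pos t H). fold k tau in Hp |- *. change (curvature xi t) with (k t).
  assert (Hs : sig t = 1 \/ sig t = -1) by (destruct (Rle_dec 0 (sig t)); [left|right]; nra).
  destruct Hs as [Hs|Hs]; rewrite Hs in E.
  - rewrite Rabs_pos_eq; lra.
  - rewrite Rabs_left; lra.
Qed.
Lemma F_r2 : Rbar_lt a b -> exists C0 D0, forall s, in_I a b s -> (/ k s) ^ 2 = 2 * C0 * s + D0.
Proof.
  intro Hab. destruct (in_I_ex a b Hab) as [s0 H0].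
  assert (Hsig : forall s, in_I a b s -> sig s = sig s0)
    by (intros s Hs; apply (const_on_I a b sig); auto; apply F_sigd).
  assert (Hq : forall s, in_I a b s -> q s = q s0).
  { intros s Hs. apply (const_on_I a b q); auto. intros u Hu. rewrite <- (F_qd u Hu). now apply q_der. }
  set (C0 := sig s0 * q s0).
  assert (Hrr : forall s, in_I a b s -> / k s * rd xi s = C0).
  { intros s Hs. unfold C0. rewrite <- (Hsig s Hs), <- (Hq s Hs). unfold q.
    rewrite (D_Derive _ _ _ (r_der s Hs)). assert (E := F_k s Hs). assert (S := F_sig2 s Hs).
    assert (Hp := kk_pos s Hs). assert (Ht := Htau s Hs). fold k tau in Hp, Ht |- *.
    assert (E2 : tau s = sig s * k s) by (rewrite E; replace (sig s * (sig s * tau s)) with ((sig s * sig s) * tau s) by ring; rewrite S; ring).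
    rewrite E2. field. split; [lra|]. intro Z; rewrite Z in S; lra. }
  exists C0, ((/ k s0) ^ 2 - 2 * C0 * s0).
  intros s Hs.
  assert (Hc : (/ k s) ^ 2 - 2 * C0 * s = (/ k s0) ^ 2 - 2 * C0 * s0).
  { apply (const_on_I a b (fun u => (/ k u) ^ 2 - 2 * C0 * u)); auto. intros u Hu.
    replace 0 with (2 * rd xi u * (/ k u) - 2 * C0 * 1) by (rewrite <- (Hrr u Hu); ring).
    apply D_minus. apply (D_sq (fun u => / k u)). exact (r_der u Hu).
    apply (is_derive_scal (fun u => u)). apply D_id. }
  lra.
Qed.
End Fwd.

Lemma r2_concl : (exists C0 D0, forall s, in_I a b s -> (/ k s) ^ 2 = 2 * C0 * s + D0) ->
  (exists k0 : R, forall t, in_I a b t -> curvature xi t = k0) \/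
  (exists (c t0 : R), 0 < c /\ ~ in_I a b t0 /\
        forall t, in_I a b t -> curvature xi t = c / sqrt (Rabs (t - t0))).
Proof.
  intros [C0 [D0 HC]].
  assert (Hr : forall s, in_I a b s -> curvature xi s = / sqrt (2 * C0 * s + D0)).
  { intros s Hs. rewrite <- (HC s Hs). assert (Hp := kk_pos s Hs). fold k in Hp.
    rewrite sqrt_pow2 by (left; apply Rinv_0_lt_compat; auto). rewrite Rinv_inv. reflexivity. }
  destruct (Req_dec C0 0) as [Z|Z].
  - left. exists (/ sqrt D0). intros t Ht. rewrite Hr, Z by auto. f_equal. f_equal. ring.
  - right. set (al := 2 * C0). set (t0 := - D0 / al).
    assert (Hal : al <> 0) by (unfold al; lra).
    assert (Hpos : forall s, in_I a b s -> 0 < al * (s - t0)).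
    { intros s Hs. assert (Hp := kk_pos s Hs). fold k in Hp. assert (E := HC s Hs).
      replace (al * (s - t0)) with (2 * C0 * s + D0) by (unfold t0, al; field; lra).
      rewrite <- E. apply pow_lt. apply Rinv_0_lt_compat; auto. }
    exists (/ sqrt (Rabs al)), t0. split; [|split].
    + apply Rinv_0_lt_compat. apply sqrt_lt_R0. apply Rabs_pos_lt; auto.
    + intro H0. assert (P := Hpos t0 H0). rewrite Rminus_diag, Rmult_0_r in P. lra.
    + intros t Ht. rewrite Hr by auto. assert (P := Hpos t Ht).
      replace (2 * C0 * t + D0) with (Rabs al * Rabs (t - t0)).
      * assert (P1 : 0 < Rabs al) by (apply Rabs_pos_lt; auto).
        assert (P2 : 0 < Rabs (t - t0)).
        { apply Rabs_pos_lt. intro Z2. rewrite Z2, Rmult_0_r in P. lra. }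
        rewrite sqrt_mult by lra. assert (Q1 := sqrt_lt_R0 _ P1). assert (Q2 := sqrt_lt_R0 _ P2).
        field. split; lra.
      * rewrite <- Rabs_mult, Rabs_pos_eq by lra. unfold t0, al. field. lra.
Qed.
Section Bwd.
Context (Habs : forall t, in_I a b t -> curvature xi t = Rabs (torsion xi t)).
Let sg s := tau s / k s.

Lemma B_sg2 t : in_I a b t -> sg t * sg t = 1.
Proof.
  intro H. assert (E := Habs t H). assert (Hp := kk_pos t H). fold k in Hp. change (curvature xi t) with (k t) in E.
  fold tau in E. unfold sg.
  destruct (Rle_dec 0 (tau t)).
  - rewrite Rabs_pos_eq in E by auto. rewrite E. field. lra.
  - rewrite Rabs_left in E by lra. replace (tau t) with (- k t) by lra. field. lra.
Qed.
Lemma B_sgd t : in_I a b t -> is_derive sg t 0.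
Proof.
  intro H. assert (Hp := kk_pos t H). destruct (tau_ex t H) as [d Hd].
  assert (D : is_derive sg t (d * / k t + tau t * (- kd xi t / k t ^ 2))).
  { apply (D_mult tau (fun s => / k s)); auto. apply D_inv. now apply kk_der. unfold k; lra. }
  rewrite <- (sq1_der0 sg t _ (loc_eq a b t _ H B_sg2) D). exact D.
Qed.

Lemma sign_I (t0 : R) : Rbar_lt a b -> ~ in_I a b t0 ->
  exists e, (e = 1 \/ e = -1) /\ forall s, in_I a b s -> 0 < e * (s - t0).
Proof.
  intros Hab Hn. destruct (in_I_ex a b Hab) as [s0 H0].
  destruct (Rlt_dec t0 s0) as [L|L].
  - exists 1. split; auto. intros s Hs. destruct (Rlt_dec t0 s) as [L2|L2]; [lra|].
    exfalso. apply Hn. apply (in_I_between a b s s0); auto. lra.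
  - exists (-1). split; auto. intros s Hs. destruct (Rlt_dec s t0) as [L2|L2]; [lra|].
    exfalso. apply Hn. apply (in_I_between a b s0 s); auto.
    assert (s0 <> t0) by (intro Z; subst; auto). lra.
Qed.

Lemma B_qd : Rbar_lt a b ->
  ((exists k0 : R, forall t, in_I a b t -> curvature xi t = k0) \/
   (exists (c t0 : R), 0 < c /\ ~ in_I a b t0 /\
        forall t, in_I a b t -> curvature xi t = c / sqrt (Rabs (t - t0)))) ->
  forall t, in_I a b t -> Derive q t = 0.
Proof.
  intros Hab [[k0 Hk0] | [c [t0 [Hc [Hn Hct]]]]] t H.
  - assert (Hrd : forall s, in_I a b s -> rd xi s = 0).
    { intros s Hs. apply (D_const_loc (radius xi) s (/ k0)); [|now apply r_der].
      apply (loc_eq a b); auto. intros u Hu. unfold radius. now rewrite Hk0. }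
    apply D_Derive. apply (D_ext_loc (fun _ => 0)); [|apply D_const].
    apply (loc_eq a b); auto. intros s Hs. unfold q. rewrite (D_Derive _ _ _ (r_der s Hs)), Hrd by auto.
    unfold Rdiv; ring.
  - destruct (sign_I t0 Hab Hn) as [e [He Hpos]].
    assert (Hr2 : forall s, in_I a b s -> (/ k s) ^ 2 = e * (s - t0) / c ^ 2).
    { intros s Hs. change (k s) with (curvature xi s). rewrite Hct by auto.
      assert (P := Hpos s Hs).
      assert (E : Rabs (s - t0) = e * (s - t0)) by (destruct He; subst; [rewrite Rabs_pos_eq|rewrite Rabs_left]; lra).
      assert (P2 : 0 < Rabs (s - t0)) by lra.
      assert (Q := sqrt_lt_R0 _ P2). rewrite <- E.
      replace ((/ (c / sqrt (Rabs (s - t0)))) ^ 2) with ((sqrt (Rabs (s - t0)))^2 / c ^ 2) by (field; lra).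
      rewrite pow2_sqrt by lra. reflexivity. }
    assert (Hrr : forall s, in_I a b s -> / k s * rd xi s = e / (2 * c ^ 2)).
    { intros s Hs. assert (D := D_sq _ _ _ (r_der s Hs)).
      assert (D2 : is_derive (fun u => (e / c ^ 2) * u + (- e * t0 / c ^ 2)) s (e / c ^ 2 * 1 + 0)).
      { apply D_plus. apply (is_derive_scal (fun u => u)). apply D_id. apply D_const. }
      apply (D_ext_loc _ (fun u => radius xi u ^ 2)) in D2.
      - assert (E := D_unique _ _ _ _ D D2). unfold radius in E. change (curvature xi s) with (k s) in E.
        replace (e / (2 * c ^ 2)) with ((e / c ^ 2 * 1 + 0) / 2) by (field; lra). rewrite <- E. field.
        assert (Hp := kk_pos s Hs). fold k in Hp. lra.
      - apply (loc_eq a b); auto. intros u Hu. unfold radius. change (curvature xi u) with (k u).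
        rewrite Hr2 by auto. field. lra. }
    apply D_Derive. apply (D_ext_loc (fun s => sg s * (e / (2 * c ^ 2)))).
    + apply (loc_eq a b); auto. intros s Hs. unfold q. rewrite (D_Derive _ _ _ (r_der s Hs)).
      rewrite <- (Hrr s Hs). assert (S := B_sg2 s Hs). assert (Hp := kk_pos s Hs). fold k in Hp.
      assert (Ht := Htau s Hs). fold tau in Ht.
      assert (E : tau s = sg s * k s) by (unfold sg; field; lra).
      fold tau. rewrite E. assert (Hs0 : sg s <> 0) by (intro Z; rewrite Z in S; lra).
      transitivity ((sg s * sg s) * rd xi s / (sg s * k s)); [field; lra|].
      rewrite S. field. lra.
    + replace 0 with (0 * (e / (2 * c ^ 2)) + sg t * 0) by ring.
      apply (D_mult sg (fun _ => e / (2 * c ^ 2))). now apply B_sgd. apply D_const.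
Qed.
Lemma B_main : Rbar_lt a b ->
  ((exists k0 : R, forall t, in_I a b t -> curvature xi t = k0) \/
   (exists (c t0 : R), 0 < c /\ ~ in_I a b t0 /\
        forall t, in_I a b t -> curvature xi t = c / sqrt (Rabs (t - t0)))) ->
  exists M : V3 -> V3, orient_isometry M /\ forall t, in_I a b t -> M (xi t) = evolute xi t.
Proof.
  intros Hab Hcase. assert (Hqd := B_qd Hab Hcase).
  destruct (in_I_ex a b Hab) as [s0 H0].
  assert (Hsg : forall s, in_I a b s -> sg s = sg s0)
    by (intros s Hs; apply (const_on_I a b sg); auto; apply B_sgd).
  set (s1 := sg s0).
  assert (Hs1 : s1 = 1 \/ s1 = -1)
    by (assert (S := B_sg2 s0 H0); fold s1 in S; destruct (Rle_dec 0 s1); [left|right]; nra).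
  assert (Htk : forall s, in_I a b s -> tau s = s1 * k s).
  { intros s Hs. unfold s1. rewrite <- (Hsg s Hs). unfold sg. assert (Hp := kk_pos s Hs). fold k in Hp.
    field. lra. }
  assert (Hsig : forall s, in_I a b s -> sig s = s1).
  { intros s Hs. unfold sig. rewrite Hqd by auto. rewrite Htk by auto. assert (Hp := kk_pos s Hs). fold k in Hp.
    field. lra. }
  assert (o1 := dotTT s0 H0). assert (o2 := dotNN s0 H0). assert (o3 := dotTN s0 H0).
  set (T0 := T s0) in *. set (N0 := N s0) in *.
  assert (EB0 : B s0 = cross T0 N0) by reflexivity.
  set (P := vscal s1 (B s0)). set (Q := vscal (-1) N0).
  assert (p1 : dot P P = 1).
  { unfold P. rewrite dot_scal_l, dot_scal_r. destruct (dotBB s0 H0) as [E _]. rewrite E.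
    destruct Hs1 as [-> | ->]; ring. }
  assert (p2 : dot Q Q = 1) by (unfold Q; rewrite dot_scal_l, dot_scal_r, o2; ring).
  assert (p3 : dot P Q = 0).
  { unfold P, Q. rewrite dot_scal_l, dot_scal_r. destruct (dotBB s0 H0) as [_ [_ E]].
    rewrite dot_comm. fold N0 in E. rewrite E. ring. }
  assert (PQ : cross P Q = vscal s1 T0) by (unfold P, Q; rewrite EB0; now apply cross_PQ).
  set (L := FL T0 N0 P Q).
  assert (Ldot : forall u v, dot (L u) (L v) = dot u v) by (intros; now apply FL_dot).
  destruct (FL_T T0 N0 P Q o1 o2 o3) as [LT0 [LN0 LB0]]. fold L in LT0, LN0, LB0.
  rewrite <- EB0, PQ in LB0.
  set (f := fun s => dot (L (T s)) (vscal s1 (B s)) + dot (L (N s)) (vscal (-1) (N s))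
                     + dot (L (B s)) (vscal s1 (T s))).
  assert (fder : forall s, in_I a b s -> is_derive f s 0).
  { intros s Hs. unfold f, L.
    assert (D := D_plus _ _ s _ _
      (D_plus _ _ s _ _
        (D_dot _ _ s _ _ (vder_FL T0 N0 P Q _ s _ (X_der 1 s Hs)) (vder_cscal s1 _ s _ (B_der s Hs)))
        (D_dot _ _ s _ _ (vder_FL T0 N0 P Q _ s _ (N_der s Hs)) (vder_cscal (-1) _ s _ (N_der s Hs))))
      (D_dot _ _ s _ _ (vder_FL T0 N0 P Q _ s _ (B_der s Hs)) (vder_cscal s1 _ s _ (X_der 1 s Hs)))).
    match type of D with is_derive _ _ ?d => replace 0 with d; [exact D|] end.
    rewrite X2_kN, Nd_frenet, Htk by auto. unfold FL. exact (alg_f _ _ _ (T s) (N s) (B s) (k s) s1 Hs1). }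
  assert (f0 : f s0 = 3).
  { unfold f. fold T0 N0. rewrite LT0, LN0, LB0. unfold Q. fold P.
    rewrite p1, !dot_scal_l, !dot_scal_r, o1, o2. destruct Hs1 as [-> | ->]; ring. }
  assert (LT : forall s, in_I a b s -> L (T s) = vscal s1 (B s)).
  { intros s Hs. assert (F := const_on_I a b f fder s s0 Hs H0). rewrite f0 in F.
    destruct (dotBB s Hs) as [b1 _].
    assert (u1 : dot (vscal s1 (B s)) (vscal s1 (B s)) = 1)
      by (rewrite dot_scal_l, dot_scal_r, b1; destruct Hs1 as [-> | ->]; ring).
    assert (u2 : dot (vscal (-1) (N s)) (vscal (-1) (N s)) = 1)
      by (rewrite dot_scal_l, dot_scal_r, dotNN by auto; ring).
    assert (u3 : dot (vscal s1 (T s)) (vscal s1 (T s)) = 1)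
      by (rewrite dot_scal_l, dot_scal_r, dotTT by auto; destruct Hs1 as [-> | ->]; ring).
    edestruct (sum3_eq (L (T s)) (L (N s)) (L (B s))) as [R1 _]; [| | | exact u1 | exact u2 | exact u3 | exact F | exact R1].
    - rewrite Ldot. now apply dotTT.
    - rewrite Ldot. now apply dotNN.
    - rewrite Ldot. exact b1. }
  set (g := fun s => vsub (evolute xi s) (L (xi s))).
  assert (gder : forall s, in_I a b s -> vder g s (mkV3 0 0 0)).
  { intros s Hs. unfold g.
    replace (mkV3 0 0 0) with (vsub (vscal (sig s) (B s)) (L (T s))).
    - apply vder_sub. now apply evol_der. unfold L. apply vder_FL. now apply xi_der.
    - rewrite LT, Hsig by auto. veq; ring. }
  assert (gc : forall s, in_I a b s -> g s = g s0).
  { intros s Hs. apply v3_ext.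
    - apply (const_on_I a b (fun u => vx (g u))); auto. intros u Hu. apply (gder u Hu).
    - apply (const_on_I a b (fun u => vy (g u))); auto. intros u Hu. apply (gder u Hu).
    - apply (const_on_I a b (fun u => vz (g u))); auto. intros u Hu. apply (gder u Hu). }
  exists (fun x => vadd (L x) (g s0)). split.
  - assert (Msub : forall x y, vsub (vadd (L x) (g s0)) (vadd (L y) (g s0)) = L (vsub x y)).
    { intros. unfold L, FL, lin. veq; ring. }
    split.
    + intros x y. rewrite Msub. unfold vnorm. now rewrite Ldot.
    + intros x y z w. rewrite !Msub. unfold L. apply FL_det; auto.
  - intros t Ht. rewrite <- (gc t Ht). unfold g. veq; ring.
Qed.
End Bwd.
End Frenet.
Lemma wexp u C1 C2 C3 a1 a2 a3 :
  dot (vsub u (lin C1 C2 C3 (mkV3 a1 a2 a3))) (vsub u (lin C1 C2 C3 (mkV3 a1 a2 a3))) =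
  dot u u - 2 * (a1 * dot u C1 + a2 * dot u C2 + a3 * dot u C3)
  + a1*a1*dot C1 C1 + a2*a2*dot C2 C2 + a3*a3*dot C3 C3
  + 2*a1*a2*dot C1 C2 + 2*a1*a3*dot C1 C3 + 2*a2*a3*dot C2 C3.
Proof. unfold lin, dot; simpl; ring. Qed.

Lemma iso_lin M : orient_isometry M -> exists C1 C2 C3,
  (forall u v, dot (lin C1 C2 C3 u) (lin C1 C2 C3 v) = dot u v) /\
  (forall u v w, det3 (lin C1 C2 C3 u) (lin C1 C2 C3 v) (lin C1 C2 C3 w) = det3 u v w) /\
  (forall x, M x = vadd (lin C1 C2 C3 x) (M (mkV3 0 0 0))).
Proof.
  intros [Hdist Hdet]. set (z := mkV3 0 0 0).
  set (Lf := fun x => vsub (M x) (M z)).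
  assert (Hd : forall x y, dot (vsub (M x) (M y)) (vsub (M x) (M y)) = dot (vsub x y) (vsub x y))
    by (intros; apply vnorm_sq; auto).
  assert (E : forall u v, dot (vsub u v) (vsub u v) = dot u u + dot v v - 2 * dot u v)
    by (intros; unfold dot; simpl; ring).
  assert (nL : forall x, dot (Lf x) (Lf x) = dot x x).
  { intro x. unfold Lf. rewrite Hd. unfold z, dot; simpl; ring. }
  assert (dL : forall x y, dot (Lf x) (Lf y) = dot x y).
  { intros x y. assert (H1 := Hd x y).
    replace (vsub (M x) (M y)) with (vsub (Lf x) (Lf y)) in H1 by (unfold Lf; veq; ring).
    rewrite !E, !nL in H1. lra. }
  set (C1 := Lf (mkV3 1 0 0)). set (C2 := Lf (mkV3 0 1 0)). set (C3 := Lf (mkV3 0 0 1)).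
  assert (Llin : forall x, Lf x = lin C1 C2 C3 x).
  { intros [x1 x2 x3].
    assert (W0 : dot (vsub (Lf (mkV3 x1 x2 x3)) (lin C1 C2 C3 (mkV3 x1 x2 x3)))
                      (vsub (Lf (mkV3 x1 x2 x3)) (lin C1 C2 C3 (mkV3 x1 x2 x3))) = 0).
    { rewrite wexp. unfold C1, C2, C3. rewrite !dL. unfold dot; simpl; ring. }
    apply dot_zero in W0. destruct (Lf (mkV3 x1 x2 x3)) as [l1 l2 l3] eqn:EL.
    destruct (lin C1 C2 C3 (mkV3 x1 x2 x3)) as [m1 m2 m3].
    simpl in W0. injection W0; intros. f_equal; lra. }
  exists C1, C2, C3. split; [|split].
  - intros u v. rewrite <- !Llin. apply dL.
  - intros u v w. rewrite <- !Llin. unfold Lf.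
    assert (Z : forall y, vsub y z = y) by (intro y; unfold z; veq; ring).
    rewrite (Hdet z u v w), !Z. reflexivity.
  - intro x. rewrite <- Llin. unfold Lf. veq; ring.
Qed.

Theorem mainTheorem7 (a b : Rbar) (xi : R -> V3) :
  Rbar_lt a b ->
  smooth_on a b xi ->
  (forall t, in_I a b t -> vnorm (dV xi t) = 1) ->
  (forall t, in_I a b t -> 0 < curvature xi t) ->
  (forall t, in_I a b t -> torsion xi t <> 0) ->
  ((exists M : V3 -> V3, orient_isometry M /\
      forall t, in_I a b t -> M (xi t) = evolute xi t)
   <->
   ((forall t, in_I a b t -> curvature xi t = Rabs (torsion xi t)) /\
    ((exists k0 : R, forall t, in_I a b t -> curvature xi t = k0) \/
     (exists (c t0 : R), 0 < c /\ ~ in_I a b t0 /\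
        forall t, in_I a b t -> curvature xi t = c / sqrt (Rabs (t - t0)))))).
Proof.
  intros Hab Hsm Hunit Hk Htau. split.
  - intros [M [HM Hev]]. destruct (iso_lin M HM) as [C1 [C2 [C3 [Ldot [Ldet HMl]]]]].
    assert (Hev' : forall t, in_I a b t -> evolute xi t = vadd (lin C1 C2 C3 (xi t)) (M (mkV3 0 0 0))).
    { intros t Ht. rewrite <- Hev by auto. apply HMl. }
    split.
    + intros t Ht. exact (F_abs a b xi Hsm Hunit Hk Htau C1 C2 C3 _ Ldot Ldet Hev' t Ht).
    + apply (r2_concl a b xi Hk).
      exact (F_r2 a b xi Hsm Hunit Hk Htau C1 C2 C3 _ Ldot Ldet Hev' Hab).
  - intros [Habs Hcase]. exact (B_main a b xi Hsm Hunit Hk Htau Habs Hab Hcase).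
Qed.
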